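(* Let $T$ be a light tournament, $z\in V(T)$, and $i\ge 3$. Suppose there are vertices $z_{i-1},z'_{i-1}\in V_{i-1}(z)$ (possibly equal) such that every $s\in V_i(z)$ has an arc $(s,z_{i-1})$ or $(s,z'_{i-1})$ in $T$. Then $U:=N(z_{i-1})\cap V_i(z)$ and $S:=V_i(z)\setminus U$ both induce triangle-free (hence acyclic) subtournaments of $T$.
   Context: A triangle of a tournament is a set of three vertices inducing a directed 3-cycle. An unordered pair $ab$ of vertices is a diagonal if there exist vertices $u,v$ with $\{u,v,a\}$ and $\{u,v,b\}$ both triangles. A triangle is heavy if at least two of its pairs are diagonals; a tournament is light if it has no heavy triangle. For $S\subseteq V(T)$, the in-neighborhood is $N(S)=\{v\notin S: (v,u)\in A(T)\text{ for some }u\in S\}$, and $N(u)=N(\{u\})$. For $z\in V(T)$: $V_1(z)=\{z\}$ and $V_{j+1}(z)=N\big(\bigcup_{k\le j}V_k(z)\big)$ for $j\ge1$; thus $V_j(z)$ is the set of vertices whose shortest directed path to $z$ has length exactly $j-1$. *)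

(* Defs.v *)
From mathcomp Require Import all_boot.
Set Implicit Arguments. Unset Strict Implicit. Unset Printing Implicit Defensive.

Section Tournament.
Variable V : finType.

Definition is_tournament (arc : rel V) : Prop :=
  (forall u, ~~ arc u u) /\
  (forall u v, u != v -> arc u v (+) arc v u).

Variable arc : rel V.

Definition is_triangle (a b c : V) : bool :=
  (arc a b && arc b c && arc c a) || (arc b a && arc c b && arc a c).

Definition diagonal (a b : V) : Prop :=
  a != b /\ exists u v, is_triangle u v a /\ is_triangle u v b.

Definition heavy_triangle (a b c : V) : Prop :=
  is_triangle a b c /\
  ((diagonal a b /\ diagonal b c) \/ (diagonal b c /\ diagonal c a) \/
   (diagonal c a /\ diagonal a b)).

Definition light : Prop := forall a b c, ~ heavy_triangle a b c.

Definition Nin (S : {set V}) : {set V} :=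
  [set v | (v \notin S) && [exists u in S, arc v u]].

Definition Nv (u : V) : {set V} := Nin [set u].

(* (layer V_{j+1}(z), union of V_1(z),...,V_{j+1}(z)) *)
Fixpoint Vpair (z : V) (j : nat) : {set V} * {set V} :=
  match j with
  | 0 => ([set z], [set z])
  | j'.+1 => let C := (Vpair z j').2 in (Nin C, C :|: Nin C)
  end.

(* V_j(z) for j >= 1 (V_0(z) := empty, unused) *)
Definition Vlayer (z : V) (j : nat) : {set V} :=
  match j with 0 => set0 | j'.+1 => (Vpair z j').1 end.

Definition triangle_free (X : {set V}) : Prop :=
  forall a b c, a \in X -> b \in X -> c \in X -> ~~ is_triangle a b c.

End Tournament.

(* Main.v *)
Require Import Defs.
From mathcomp Require Import all_boot.

Lemma L_sub_C (V : finType) (arc : rel V) z k :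
  (Vpair arc z k).1 \subset (Vpair arc z k).2.
Proof. case: k => [|k] /=; [exact: subxx | exact: subsetUr]. Qed.

Lemma C_mono (V : finType) (arc : rel V) z k :
  (Vpair arc z k).2 \subset (Vpair arc z k.+1).2.
Proof. exact: subsetUl. Qed.

Lemma Lsucc (V : finType) (arc : rel V) z k x :
  x \in (Vpair arc z k.+1).1 ->
  x \notin (Vpair arc z k).2 /\ exists2 u, u \in (Vpair arc z k).2 & arc x u.
Proof.
rewrite /= inE => /andP [H1 /existsP [u /andP [Hu Hxu]]]; split => //.
by exists u.
Qed.

Lemma F1 (V : finType) (arc : rel V) z k x :
  x \in (Vpair arc z k.+1).1 -> exists2 w, w \in (Vpair arc z k).1 & arc x w.
Proof.
move=> /Lsucc [Hn [u Hu Hxu]].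
case: k Hn Hu => [|k] Hn Hu; first by exists u.
move: Hu; rewrite [(Vpair arc z k.+1).2]/= inE => /orP [Hu|Hu]; last by exists u.
exfalso; move: Hn; rewrite [(Vpair arc z k.+1).2]/= inE negb_or => /andP [Hn1].
rewrite /= inE negb_and => /orP [] /negP; apply => //.
by apply/existsP; exists u; rewrite Hu.
Qed.

Lemma F2 (V : finType) (arc : rel V) z k x w :
  x \in (Vpair arc z k.+2).1 -> w \in (Vpair arc z k).1 ->
  x != w /\ ~~ arc x w.
Proof.
move=> /Lsucc [Hn _] Hw.
have HwC : w \in (Vpair arc z k).2 by exact: (subsetP (L_sub_C _ arc z k) w Hw).
have HnC : x \notin (Vpair arc z k).2.
  by apply: contra Hn => H; apply: (subsetP (C_mono _ _ _ _)).
split; first by apply/eqP => E; rewrite E HwC in HnC.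
apply/negP => Hxw; move/negP: Hn; apply.
rewrite [(Vpair arc z k.+1).2]/= inE; apply/orP; right.
by rewrite inE HnC /=; apply/existsP; exists w; rewrite HwC.
Qed.

Lemma core (V : finType) (arc : rel V) z k y (X : {set V}) :
  is_tournament arc -> light arc ->
  y \in (Vpair arc z k.+1).1 ->
  (forall x, x \in X -> x \in (Vpair arc z k.+2).1 /\ arc x y) ->
  triangle_free arc X.
Proof.
move=> [Hirr Htot] Hl Hy HX a b c Ha Hb Hc; apply/negP => Ht.
have [w Hw Hyw] := F1 _ _ _ _ _ Hy.
have key : forall x, x \in X -> is_triangle arc w y x.
  move=> x /HX [Hx Hxy]; have [Hne Hna] := F2 _ _ _ _ _ _ Hx Hw.
  have := Htot _ _ Hne; rewrite (negbTE Hna) /= => Hwx.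
  by rewrite /is_triangle Hyw Hxy Hwx !orbT.
have neq : forall p q r, is_triangle arc p q r -> p != q.
  move=> p q r; apply: contraL => /eqP ->.
  by rewrite /is_triangle (negbTE (Hirr q)).
have Tbc : is_triangle arc b c a.
  move: Ht; rewrite /is_triangle.
  by case: (arc a b); case: (arc b c); case: (arc c a); case: (arc b a); case: (arc c b); case: (arc a c).
apply: (Hl a b c); split => //; left; split; split.
- exact: neq Ht.
- by exists w, y; split; apply: key.
- exact: neq Tbc.
- by exists w, y; split; apply: key.
Qed.


Theorem lemma4 (V : finType) (arc : rel V) (z z1 z1' : V) (i : nat) :
  is_tournament arc -> light arc -> 3 <= i ->
  z1 \in Vlayer arc z i.-1 -> z1' \in Vlayer arc z i.-1 ->
  (forall s, s \in Vlayer arc z i -> arc s z1 || arc s z1') ->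
  triangle_free arc (Nv arc z1 :&: Vlayer arc z i) /\
  triangle_free arc (Vlayer arc z i :\: (Nv arc z1 :&: Vlayer arc z i)).
Proof.
case: i => [|[|[|k]]] // Ht Hl _ H1 H1' Hs; rewrite /= in H1 H1' Hs *.
split.
- apply: (core _ _ _ _ _ _ Ht Hl H1) => x; rewrite inE => /andP [Hn Hx]; split => //.
  by move: Hn; rewrite /Nv /Nin !inE => /andP [_ /existsP [u /andP [/set1P -> ->]]].
- apply: (core _ _ _ _ _ _ Ht Hl H1') => x; rewrite in_setD => /andP [Hn Hx]; split => //.
  rewrite in_setI Hx andbT in Hn.
  have := Hs x Hx; case: (arc x z1') => //; rewrite orbF => Hxz.
  exfalso; move/negP: Hn; apply.
  have [Hnx _] := Lsucc _ arc z k.+1 x Hx.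
  have Hz1C : z1 \in (Vpair arc z k.+1).2 by exact: (subsetP (L_sub_C _ arc z k.+1) z1 H1).
  rewrite /Nv /Nin inE; apply/andP; split.
    by rewrite inE; apply/eqP => E; rewrite E Hz1C in Hnx.
  by apply/existsP; exists z1; rewrite inE eqxx Hxz.
Qed.
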